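(* Let $A=[a_{ij}]\in\{0,1\}^{N\times N}$ be the adjacency matrix of a static contact graph on nodes $\{1,\dots,N\}$ (with $a_{ii}=0$) and let $\rho(A)$ be its spectral radius. Let $\beta_0>0$, $\delta>0$, $\kappa>0$ and $0\le\beta_a<\beta_0$, and consider the SAIS system \[ \dot p_i=\beta_0(1-p_i-q_i)\sum_{j=1}^N a_{ij}p_j+\beta_a q_i\sum_{j=1}^N a_{ij}p_j-\delta p_i,\qquad \dot q_i=\kappa(1-p_i-q_i)\sum_{j=1}^N a_{ij}p_j-\beta_a q_i\sum_{j=1}^N a_{ij}p_j, \] $i\in\{1,\dots,N\}$, with initial data that are probabilities ($p_i,q_i\ge0$, $p_i+q_i\le 1$). If the infection strength satisfies \[ \tau=\frac{\beta_0}{\delta}<\frac{1}{\rho(A)}, \] then initial infections die out exponentially, i.e. each $p_i(t)$ converges to $0$ exponentially as $t\to\infty$.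
   Context: $p_i$ and $q_i$ are the (mean-field) probabilities that individual $i$ is infected and alert; $a_{ij}=1$ iff individual $j$ is a neighbor of individual $i$. $\beta_0$: infection rate of susceptible individuals; $\beta_a$: infection rate of alert individuals; $\kappa$: alerting rate; $\delta$: curing rate. $\rho(A)$ is the largest modulus of the eigenvalues of $A$. *)

(* Defs.v *)
From HB Require Import structures.
From mathcomp Require Import all_boot all_order all_algebra.
From mathcomp Require Import all_classical all_reals all_analysis.
From mathcomp Require Import complex.
Set Implicit Arguments. Unset Strict Implicit. Unset Printing Implicit Defensive.
Import Order.TTheory GRing.Theory Num.Theory numFieldNormedType.Exports.
Local Open Scope ring_scope.
Local Open Scope classical_set_scope.

Definition spectral_radius (R : realType) (n : nat) (A : 'M[R]_n) : R :=
  sup [set r : R | exists z : R[i],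
         eigenvalue (map_mx (fun x : R => Complex x 0) A) z /\ r = Normc.normc z].

Definition adjacency01 (R : realType) (N : nat) (A : 'M[R]_N) : Prop :=
  (forall i j, A i j = 0 \/ A i j = 1) /\ (forall i, A i i = 0).

Definition sais_p (R : realType) (N : nat) (A : 'M[R]_N)
    (beta0 betaa delta : R) (p q : 'I_N -> R) (i : 'I_N) : R :=
  beta0 * (1 - p i - q i) * (\sum_j A i j * p j)
  + betaa * q i * (\sum_j A i j * p j) - delta * p i.

Definition sais_q (R : realType) (N : nat) (A : 'M[R]_N)
    (kappa betaa : R) (p q : 'I_N -> R) (i : 'I_N) : R :=
  kappa * (1 - p i - q i) * (\sum_j A i j * p j)
  - betaa * q i * (\sum_j A i j * p j).

(* Main.v *)
Require Import Defs.
From HB Require Import structures.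
From mathcomp Require Import all_boot all_order all_algebra.
From mathcomp Require Import all_classical all_reals all_analysis.
From mathcomp Require Import complex.
From mathcomp Require Import ring lra.
Import Order.TTheory GRing.Theory Num.Theory numFieldNormedType.Exports.
Local Open Scope ring_scope.
Local Open Scope classical_set_scope.

Section Aux1.
Set Implicit Arguments. Unset Strict Implicit.
Lemma cont_ind (R : realType) (b : R) (P : R -> Prop) :
  0 <= b -> P 0 ->
  (forall t, 0 < t <= b -> (forall s, 0 <= s < t -> P s) -> P t) ->
  (forall t, 0 <= t < b -> P t -> exists2 e, 0 < e & forall s, t <= s < t + e -> P s) ->
  forall t, 0 <= t <= b -> P t.
Proof.
move=> b0 P0 Hstep Hopen.
pose S := [set t : R | 0 <= t <= b /\ forall s, 0 <= s <= t -> P s].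
have S0 : S 0.
  split; first by rewrite lexx b0.
  by move=> s /andP[h1 h2]; have -> : s = 0 by apply/eqP; rewrite eq_le h1 h2.
have hS : has_sup S.
  split; first by exists 0.
  by exists b => x [/andP[_ ->]].
set c := sup S.
have c0 : 0 <= c by apply: sup_upper_bound.
have cb : c <= b by apply: sup_le_ub; [by exists 0 | by move=> x [/andP[_ ->]]].
have C1 : forall s, 0 <= s < c -> P s.
  move=> s /andP[s0 sc].
  have [x [_ Hx] lt] := sup_adherent (eps := c - s) (elimT idP (etrans (subr_gt0 s c) sc)) hS.
  apply: Hx; rewrite s0 /=.
  by move: lt; rewrite /c subKr => /ltW.
have C2 : P c.
  have [->|cne] := eqVneq c 0; first exact: P0.
  apply: Hstep => //; rewrite cb andbT lt_def cne c0 //.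
have [cltb|] := ltP c b; last first.
  move=> bc t /andP[t0 tb].
  have cbe : c = b by apply/eqP; rewrite eq_le cb bc.
  have [tc|] := ltP t c; first by apply: C1; rewrite t0 tc.
  move=> ct; have -> : t = c by apply/eqP; rewrite eq_le ct cbe tb.
  exact: C2.
have [e e0 He] := Hopen c (introT andP (conj c0 cltb)) C2.
set m := Num.min e (b - c).
have m0 : 0 < m by rewrite lt_min e0 subr_gt0 cltb.
have me : m <= e by rewrite /m ge_min lexx.
have mb : m <= b - c by rewrite /m ge_min lexx orbT.
pose x := c + m / 2.
have Sx : S x.
  split.
    apply/andP; split; rewrite /x; lra.
  move=> s /andP[s0 sx].
  have [sc|cs] := ltP s c; first by apply: C1; rewrite s0 sc.
  apply: He; rewrite cs /=; rewrite /x in sx; lra.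
have : x <= c by apply: sup_upper_bound.
rewrite /x; lra.
Qed.
Lemma first_touch (R : realType) (h : R -> R) (t dh : R) : 0 < t ->
  is_derive t 1 h dh -> (forall s, 0 <= s < t -> 0 < h s) -> h t = 0 -> dh <= 0.
Proof.
move=> t0 H pos ht; rewrite leNgt; apply/negP => dh0.
have Hc : (fun e : R => e^-1 *: ((h \o shift t) (e *: 1) - h t)) @ 0^' --> dh.
  rewrite -(@derive_val _ _ _ _ _ _ _ H); exact: (@ex_derive _ _ _ _ _ _ _ H).
have := cvgr_gt _ Hc (dh / 2) ltac:(lra).
case/nbhs_ballP => r r0 Hr.
have m0 : 0 < Num.min r t by rewrite lt_min r0 t0.
have mr : Num.min r t <= r by rewrite ge_min lexx.
have mt : Num.min r t <= t by rewrite ge_min lexx orbT.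
move: m0 mr mt; set m := Num.min r t => m0 mr mt.
have := Hr (- (m / 2)).
rewrite /ball /= sub0r opprK ger0_norm; last lra.
move=> /(_ ltac:(lra)).
have e0 : (- (m/2) != 0) by apply/eqP; lra.
move=> /(_ e0).
have EA : (- (m / 2))%:A = - (m / 2) :> R by rewrite -[RHS]mulr1.
rewrite /= ht subr0 EA.
rewrite -[_ *: h _]/(_ * h _).
have hp : 0 < h (- (m/2) + t) by apply: pos; apply/andP; split; lra.
have : (- (m/2))^-1 * h (- (m/2) + t) < 0 by rewrite nmulr_rlt0 // invr_lt0; lra.
move=> ? ?; lra.
Qed.
Lemma cont_near (R : realType) (f : R -> R) t z :
  {within [set x : R | 0 <= x], continuous f} -> 0 <= t -> z < f t ->
  \forall s \near t, 0 <= s -> z < f s.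
Proof.
rewrite continuous_subspace_in => /(_ t) Hc t0 zf.
have Hw : f x @[x --> within [set x | 0 <= x] (nbhs t)] --> f t.
  rewrite (nbhs_subspace_in (A := [set x : R | 0 <= x])) //.
  exact: Hc (mem_set t0).
have := cvgr_gt (f t) Hw z zf.
rewrite near_withinE; apply; exact: within_filter.
Qed.

Lemma near_e (R : realType) (t : R) (Q : R -> Prop) :
  (\forall s \near t, Q s) -> exists2 e, 0 < e & forall s, t <= s < t + e -> Q s.
Proof.
case/nbhs_ballP => e e0 He; exists e => // s /andP[h1 h2].
apply: He; rewrite /ball /= distrC ger0_norm; lra.
Qed.

Lemma deriv_ge0_at (R : realType) (h : R -> R) (t dh : R) : 0 < t ->
  is_derive t 1 h dh -> (forall s, 0 <= s < t -> 0 < h s) -> 0 <= h t.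
Proof.
move=> t0 H pos; rewrite leNgt; apply/negP => ht.
have Hc : {for t, continuous h}.
  apply: differentiable_continuous; apply/derivable1_diffP; exact: (@ex_derive _ _ _ _ _ _ _ H).
have := cvgr_lt (h t) Hc 0 ht => /(_ (nbhs_filter t)) H2; move: H2.
case/nbhs_ballP => r r0 Hr.
have m0 : 0 < Num.min r t by rewrite lt_min r0 t0.
have mr : Num.min r t <= r by rewrite ge_min lexx.
have mt : Num.min r t <= t by rewrite ge_min lexx orbT.
move: m0 mr mt; set m := Num.min r t => m0 mr mt.
have := Hr (t - m / 2).
rewrite /ball /= opprB addrC subrK ger0_norm; last lra.
move=> /(_ ltac:(lra)).
have : 0 < h (t - m / 2) by apply: pos; apply/andP; split; lra.
move=> ? ?; lra.
Qed.

Lemma touch_pos (R : realType) (h : R -> R) (t dh : R) : 0 < t ->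
  is_derive t 1 h dh -> (forall s, 0 <= s < t -> 0 < h s) -> (h t = 0 -> 0 < dh) -> 0 < h t.
Proof.
move=> t0 H pos Hd.
have := @deriv_ge0_at _ h t dh t0 H pos; rewrite le_eqVlt => /orP[/eqP h0|//].
have := @first_touch _ h t dh t0 H pos (esym h0).
have := Hd (esym h0); lra.
Qed.
Lemma wcD (R : realType) (f g : R -> R) : {within [set x : R | 0 <= x], continuous f} ->
  {within [set x : R | 0 <= x], continuous g} -> {within [set x : R | 0 <= x], continuous (fun s => f s + g s)}.
Proof. move=> Hf Hg x. apply: continuousD. exact: Hf. exact: Hg. Qed.
Lemma wcN (R : realType) (f : R -> R) : {within [set x : R | 0 <= x], continuous f} ->
   {within [set x : R | 0 <= x], continuous (fun s => - f s)}.
Proof. move=> Hf x. apply: continuousN. exact: Hf. Qed.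
Lemma wcC (R : realType) (c : R) : {within [set x : R | 0 <= x], continuous (fun s : R => c)}.
Proof. move=> x. exact: cvg_cst. Qed.
Lemma dE (R : realType) (L eps x : R) : is_derive x 1 (fun s : R => eps * expR (L * s)) (eps * (L * expR (L * x))).
Proof.
have H1 : is_derive x 1 (fun s : R => L * s) L.
  have H0 := is_deriveZ L (@is_derive_id _ _ x 1).
  have E : L *: (1:R) = L by rewrite [LHS]mulr1.
  rewrite E in H0. exact: H0.
have H2 := is_derive1_comp (is_derive_expR (L * x)) H1.
have H3 := is_deriveZ eps H2.
move: H3. have -> : eps * (L * expR (L * x)) = eps *: (expR (L * x) * L) by rewrite [expR _ * _]mulrC. exact. 
Qed.
Lemma cE (R : realType) (L eps : R) : continuous (fun s : R => eps * expR (L * s)).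
Proof. move=> x.
have H := @dE R L eps x.
apply: differentiable_continuous; apply/derivable1_diffP; exact: (@ex_derive _ _ _ _ _ _ _ H).
Qed.
Lemma wcE (R : realType) (L eps : R) : {within [set x : R | 0 <= x], continuous (fun s : R => eps * expR (L * s))}.
Proof. apply: continuous_subspaceT. exact: cE. Qed.

Lemma sumA_bounds (R : realType) (N : nat) (A : 'M[R]_N) (x : 'I_N -> R) (lo hi : R) i :
  adjacency01 A -> lo <= 0 -> 0 <= hi -> (forall j, lo <= x j <= hi) ->
  N%:R * lo <= \sum_j A i j * x j <= N%:R * hi.
Proof.
move=> [A01 _] lo0 hi0 Hx.
have -> : N%:R * lo = \sum_(j < N) lo by rewrite sumr_const card_ord mulr_natl.
have -> : N%:R * hi = \sum_(j < N) hi by rewrite sumr_const card_ord mulr_natl.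
apply/andP; split; apply: ler_sum => j _; have /andP[h1 h2] := Hx j;
  case: (A01 i j) => ->; rewrite ?mul0r ?mul1r //.
Qed.

Lemma prod_lb (R : realType) (a b G n : R) : -G <= a -> a <= 3 -> - (n * G) <= b -> b <= 3 * n ->
  0 <= G -> 0 <= n -> - (3 * n * G) <= a * b.
Proof.
move=> h1 h2 h3 h4 h5 h6.
have [a0|a0] := leP 0 a.
  have : a * (- (n * G)) <= a * b by rewrite ler_wpM2l.
  have : a * (n * G) <= 3 * (n * G) by rewrite ler_wpM2r // mulr_ge0.
  move=> ? ?; lra.
have [b0|b0] := leP 0 b.
  have : (- G) * b <= a * b by rewrite ler_wpM2r.
  have : G * b <= G * (3 * n) by rewrite ler_wpM2l.
  move=> ? ?; nra.
have : 0 < a * b by rewrite nmulr_rgt0.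
have : 0 <= 3 * n * G by rewrite !mulr_ge0.
lra.
Qed.
Lemma invariance (R : realType) (N : nat) (A : 'M[R]_N)
  (beta0 betaa kappa delta : R) (p q : R -> 'I_N -> R) :
  adjacency01 A ->
  0 < beta0 -> 0 < delta -> 0 < kappa -> 0 <= betaa ->
  (forall i, {within [set x : R | 0 <= x], continuous (fun s => p s i)}) ->
  (forall i, {within [set x : R | 0 <= x], continuous (fun s => q s i)}) ->
  (forall (i : 'I_N) (t : R), 0 < t ->
     is_derive t 1 (fun s => p s i) (sais_p A beta0 betaa delta (p t) (q t) i)) ->
  (forall (i : 'I_N) (t : R), 0 < t ->
     is_derive t 1 (fun s => q s i) (sais_q A kappa betaa (p t) (q t) i)) ->
  (forall i, 0 <= p 0 i /\ 0 <= q 0 i /\ p 0 i + q 0 i <= 1) ->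
  forall T, 0 <= T -> forall i, 0 <= p T i /\ 0 <= q T i /\ 0 <= 1 - p T i - q T i.
Proof.
move=> Aadj b0 d0 k0 ba0 cP cQ dP dQ init T T0.
have n0 : 0 <= N%:R :> R by [].
set n : R := N%:R in n0.
pose L := 3 * n * (beta0 + betaa + kappa) + (beta0 + kappa + betaa) * n + delta + 1.
have L0 : 0 < L by rewrite /L; nra.
pose P (eps : R) (s : R) := forall i, 0 < p s i + eps * expR (L * s) /\
   0 < q s i + eps * expR (L * s) /\ 0 < 1 - p s i - q s i + eps * expR (L * s).
have key : forall eps, 0 < eps -> eps * expR (L * T) <= 1 -> forall t, 0 <= t <= T -> P eps t.
  move=> eps e0 eT.
  have g0 : forall s, 0 < eps * expR (L * s) by move=> s; rewrite mulr_gt0 // expR_gt0.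
  have gle : forall s, s <= T -> eps * expR (L * s) <= 1.
    move=> s sT; apply: le_trans eT; apply: ler_wpM2l; first exact: ltW.
    by rewrite ler_expR; apply: ler_wpM2l => //; exact: ltW.
  apply: cont_ind => //.
  - move=> i; rewrite mulr0 expR0 mulr1; have [h1 [h2 h3]] := init i; lra.
  - move=> t /andP[t0 tT] Hb.
    have dp : forall j, is_derive t 1 (fun s => p s j + eps * expR (L * s))
        (sais_p A beta0 betaa delta (p t) (q t) j + eps * (L * expR (L * t))).
      move=> j; have H := is_deriveD (dP j t t0) (@dE R L eps t); exact H.
    have dq : forall j, is_derive t 1 (fun s => q s j + eps * expR (L * s))
        (sais_q A kappa betaa (p t) (q t) j + eps * (L * expR (L * t))).
      move=> j; have H := is_deriveD (dQ j t t0) (@dE R L eps t); exact H.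
    have dr : forall j, is_derive t 1 (fun s => 1 - p s j - q s j + eps * expR (L * s))
        (0 - sais_p A beta0 betaa delta (p t) (q t) j - sais_q A kappa betaa (p t) (q t) j
          + eps * (L * expR (L * t))).
      move=> j; have H := is_deriveD (is_deriveB (is_deriveB (is_derive_cst (1:R) t 1) (dP j t t0)) (dQ j t t0)) (@dE R L eps t); exact H.
    have ge : forall j, 0 <= p t j + eps * expR (L * t) /\ 0 <= q t j + eps * expR (L * t) /\
                   0 <= 1 - p t j - q t j + eps * expR (L * t).
      move=> j; split; [|split].
      + apply: (deriv_ge0_at t0 (dp j)) => s /andP[s0 st]; exact: (Hb s (introT andP (conj s0 st)) j).1.
      + apply: (deriv_ge0_at t0 (dq j)) => s /andP[s0 st]; exact: (Hb s (introT andP (conj s0 st)) j).2.1.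
      + apply: (deriv_ge0_at t0 (dr j)) => s /andP[s0 st]; exact: (Hb s (introT andP (conj s0 st)) j).2.2.
    have G0 := g0 t; have G1 := gle t tT.
    move: G0 G1 ge dp dq dr; set G := eps * expR (L * t) => G0 G1 ge dp dq dr.
    have LG : eps * (L * expR (L * t)) = L * G by rewrite /G; ring.
    have Sb : forall j, n * (- G) <= \sum_k A j k * p t k <= n * 3.
      move=> j; apply: sumA_bounds; [done | lra | lra | ].
      move=> k; have [h1 [h2 h3]] := ge k; apply/andP; split; lra.
    move=> i; have [g1 [g2 g3]] := ge i; have /andP[s1 s2] := Sb i.
    move: s1 s2; set S := \sum_k A i k * p t k => s1 s2.
    have pr1 : - (3 * n * G) <= (1 - p t i - q t i) * S by apply: prod_lb; lra.
    have pr2 : - (3 * n * G) <= q t i * S by apply: prod_lb; lra.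
    have bb1 : beta0 * (- (3 * n * G)) <= beta0 * ((1 - p t i - q t i) * S) by rewrite ler_wpM2l // ltW.
    have bb2 : betaa * (- (3 * n * G)) <= betaa * (q t i * S) by rewrite ler_wpM2l.
    have bb3 : kappa * (- (3 * n * G)) <= kappa * ((1 - p t i - q t i) * S) by rewrite ler_wpM2l // ltW.
    have nG : n * G <= n by rewrite ler_piMr.
    split; [|split].
    + apply: (touch_pos t0 (dp i)).
        move=> s /andP[s0 st]; exact: (Hb s (introT andP (conj s0 st)) i).1.
      move=> h0; rewrite -/G in h0; rewrite LG /sais_p -/S.
      have -> : p t i = - G by lra.
      have : L * G = 3 * n * G * beta0 + 3 * n * G * betaa + (3 * n * (kappa) + (beta0 + kappa + betaa) * n + delta + 1) * G
        by rewrite /L; ring.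
      have : 0 < (3 * n * kappa + (beta0 + kappa + betaa) * n + delta + 1) * G by apply: mulr_gt0 => //; nra.
      move=> ? ?; nra.
    + apply: (touch_pos t0 (dq i)).
        move=> s /andP[s0 st]; exact: (Hb s (introT andP (conj s0 st)) i).2.1.
      move=> h0; rewrite -/G in h0; rewrite LG /sais_q -/S.
      have -> : q t i = - G by lra.
      have b4 : betaa * (G * (- (n * G))) <= betaa * (G * S) by apply: ler_wpM2l => //; apply: ler_wpM2l; [exact: ltW | lra].
      have b5 : betaa * (G * (n * G)) <= betaa * (G * n) by apply: ler_wpM2l => //; apply: ler_wpM2l; [exact: ltW | lra].
      have : L * G = 3 * n * G * kappa + betaa * (G * n) + (3 * n * (beta0 + betaa) + (beta0 + kappa) * n + delta + 1) * G
        by rewrite /L; ring.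
      have : 0 < (3 * n * (beta0 + betaa) + (beta0 + kappa) * n + delta + 1) * G by apply: mulr_gt0 => //; nra.
      move=> ? ?; nra.
    + apply: (touch_pos t0 (dr i)).
        move=> s /andP[s0 st]; exact: (Hb s (introT andP (conj s0 st)) i).2.2.
      move=> h0; rewrite -/G in h0; rewrite LG /sais_p /sais_q -/S.
      have E1 : 1 - p t i - q t i = - G by lra.
      have -> : 0 - (beta0 * (1 - p t i - q t i) * S + betaa * q t i * S - delta * p t i) -
         (kappa * (1 - p t i - q t i) * S - betaa * q t i * S) + L * G
         = (beta0 + kappa) * (G * S) + delta * p t i + L * G by rewrite E1; ring.
      have b4 : (beta0 + kappa) * (G * (- (n * G))) <= (beta0 + kappa) * (G * S)
        by apply: ler_wpM2l; [by rewrite addr_ge0 // ltW | apply: ler_wpM2l; [exact: ltW | lra]].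
      have b5 : (beta0 + kappa) * (G * (n * G)) <= (beta0 + kappa) * (G * n)
        by apply: ler_wpM2l; [by rewrite addr_ge0 // ltW | apply: ler_wpM2l; [exact: ltW | lra]].
      have b6 : delta * (- G) <= delta * p t i by apply: ler_wpM2l; [exact: ltW | lra].
      have : L * G = (beta0 + kappa) * (G * n) + delta * G + (3 * n * (beta0 + betaa + kappa) + betaa * n + 1) * G
        by rewrite /L; ring.
      have : 0 < (3 * n * (beta0 + betaa + kappa) + betaa * n + 1) * G by apply: mulr_gt0 => //; nra.
      move=> ? ?; nra.
  - move=> t /andP[t0 tT] Pt.
    have : \forall s \near t, forall i, 0 <= s -> 
       (0 < p s i + eps * expR (L * s) /\ 0 < q s i + eps * expR (L * s) /\
        0 < 1 - p s i - q s i + eps * expR (L * s)).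
      apply: (@filter_forall _ _ (fun i s => 0 <= s -> 0 < p s i + eps * expR (L * s) /\ 0 < q s i + eps * expR (L * s) /\ 0 < 1 - p s i - q s i + eps * expR (L * s)) (nbhs t) _) => i.
      have [h1 [h2 h3]] := Pt i.
      have c1 := cont_near (wcD (cP i) (@wcE R L eps)) t0 h1.
      have c2 := cont_near (wcD (cQ i) (@wcE R L eps)) t0 h2.
      have c3 := cont_near (wcD (wcD (wcD (@wcC R 1) (wcN (cP i))) (wcN (cQ i))) (@wcE R L eps)) t0 h3.
      apply: filterS3 c1 c2 c3 => s e1 e2 e3 s0; split; [exact: e1 s0|split; [exact: e2 s0|]].
      have := e3 s0; by [].
    move=> /near_e [e ee0 He]; exists e => // s /andP[ts se] i.
    apply: He; [by rewrite ts | exact: le_trans ts].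
have nonneg : forall x : R, (forall eps, 0 < eps -> eps * expR (L * T) <= 1 -> 0 < x + eps * expR (L * T)) -> 0 <= x.
  move=> x Hx; rewrite leNgt; apply/negP => x0.
  pose m := Num.min 1 (- x / 2).
  have m0 : 0 < m by rewrite lt_min ltr01 /=; lra.
  have m1 : m <= 1 by rewrite /m ge_min lexx.
  have m2 : m <= - x / 2 by rewrite /m ge_min lexx orbT.
  have E : m * expR (- (L * T)) * expR (L * T) = m by rewrite -mulrA -expRD addNr expR0 mulr1.
  have := Hx (m * expR (- (L * T))); rewrite E => /(_ _ m1).
  have : 0 < m * expR (- (L * T)) by rewrite mulr_gt0 // expR_gt0.
  move=> h /(_ h); lra.
move=> i; split; [|split]; apply: nonneg => eps e0 eT; have := key eps e0 eT T;
  rewrite T0 lexx => /(_ isT i) [h1 [h2 h3]] //; lra.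
Qed.

End Aux1.
Unset Implicit Arguments. Set Strict Implicit.

Lemma normc_sum (R : rcfType) (I : Type) (r : seq I) (P : pred I) (F : I -> R[i]) :
  Normc.normc (\sum_(j <- r | P j) F j) <= \sum_(j <- r | P j) Normc.normc (F j).
Proof.
elim: r => [|a r IH]; first by rewrite !big_nil Normc.normc0.
rewrite !big_cons; case: (P a) => //.
apply: le_trans (le_normcD _ _) _; exact: lerD.
Qed.

Lemma normc_ge0' (R : rcfType) (z : R[i]) : 0 <= Normc.normc z.
Proof. by case: z => a b; rewrite /Normc.normc sqrtr_ge0. Qed.

Lemma eig_bound (R : realType) (N : nat) (A : 'M[R]_N) (z : R[i]) :
  adjacency01 A -> eigenvalue (map_mx (fun x : R => Complex x 0) A) z ->
  Normc.normc z <= N%:R.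
Proof.
move=> [A01 _] /eigenvalueP [v Hv vnz].
have [j0 Hj0] : exists j, v 0 j != 0.
  apply/existsP; apply: contraR vnz => /existsPn H; apply/eqP/rowP => j.
  by rewrite mxE; apply/eqP; move: (H j); rewrite negbK.
pose k := [arg max_(k > j0) Normc.normc (v 0 k)]%O.
have Hk : forall j, Normc.normc (v 0 j) <= Normc.normc (v 0 k).
  rewrite /k; case: arg_maxP => //= k' _ Hm j; exact: Hm.
have m0 : 0 < Normc.normc (v 0 k).
  apply: lt_le_trans (Hk j0); rewrite lt_def normc_ge0' andbT.
  by apply: contra Hj0 => /eqP/Normc.eq0_normc ->.
have E := congr1 (fun M : 'rV[R[i]]_N => M 0 k) Hv; rewrite /= !mxE in E.
have : Normc.normc z * Normc.normc (v 0 k) <= N%:R * Normc.normc (v 0 k).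
  rewrite -Normc.normcM -E.
  apply: le_trans (normc_sum _ _ _ _ _) _.
  have -> : N%:R * Normc.normc (v 0 k) = \sum_(j < N) Normc.normc (v 0 k)
    by rewrite sumr_const card_ord mulr_natl.
  apply: ler_sum => j _; rewrite mxE Normc.normcM.
  case: (A01 j k) => ->.
    have -> : (Complex (0:R) 0) = 0 by [].
    by rewrite Normc.normc0 mulr0 normc_ge0'.
  have -> : (Complex (1:R) 0) = 1 by [].
  by rewrite Normc.normc1 mulr1.
by rewrite ler_pM2r.
Qed.

Lemma det_nz (R : realType) (N : nat) (A : 'M[R]_N) (l : R) :
  adjacency01 A -> 0 <= l -> spectral_radius A < l -> \det (l%:M - A) != 0.
Proof.
move=> Aadj l0 lrho; apply/negP => /det0P [v vnz Hv].
set S := [set r : R | exists z : R[i],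
         eigenvalue (map_mx (fun x : R => Complex x 0) A) z /\ r = Normc.normc z].
have hub : has_ubound S.
  exists N%:R => r [z [Hz ->]]; exact: eig_bound Aadj Hz.
have Sl : S l.
  exists (Complex l 0); split.
    apply/eigenvalueP; exists (map_mx (real_complex R) v).
      have -> : map_mx (fun x : R => Complex x 0) A = map_mx (real_complex R) A by [].
      rewrite -map_mxM.
      have -> : v *m A = l *: v.
        by move/eqP: Hv; rewrite mulmxBr mul_mx_scalar subr_eq0 => /eqP <-.
      apply/matrixP => i j; rewrite !mxE /=.
      by rewrite rmorphM.
    apply: contra vnz => /eqP H; apply/eqP/matrixP => i j.
    have := congr1 (fun M : 'rV[R[i]]_N => M i j) H; rewrite !mxE /=.
    by case.
  by rewrite /Normc.normc /= expr0n /= addr0 sqrtr_sqr ger0_norm.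
have := ub_le_sup hub Sl.
move: lrho; rewrite /spectral_radius -/S; lra.
Qed.

Lemma cont_sum (R : realType) (I : Type) (r : seq I) (P : pred I) (F : I -> R -> R) (x : R) :
  (forall i, {for x, continuous (F i)}) -> {for x, continuous (fun y => \sum_(i <- r | P i) F i y)}.
Proof.
move=> HF; elim: r => [|a r IH].
  have -> : (fun y => \sum_(i <- [::] | P i) F i y) = fun=> 0 by apply/funext => y; rewrite big_nil.
  exact: cvg_cst.
case Pa: (P a).
  have -> : (fun y => \sum_(i <- a :: r | P i) F i y) = (fun y => F a y + \sum_(i <- r | P i) F i y)
    by apply/funext => y; rewrite big_cons Pa.
  exact: continuousD (HF a) IH.
have -> : (fun y => \sum_(i <- a :: r | P i) F i y) = (fun y => \sum_(i <- r | P i) F i y)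
  by apply/funext => y; rewrite big_cons Pa.
exact: IH.
Qed.

Lemma cont_prod (R : realType) (I : Type) (r : seq I) (P : pred I) (F : I -> R -> R) (x : R) :
  (forall i, {for x, continuous (F i)}) -> {for x, continuous (fun y => \prod_(i <- r | P i) F i y)}.
Proof.
move=> HF; elim: r => [|a r IH].
  have -> : (fun y => \prod_(i <- [::] | P i) F i y) = fun=> 1 by apply/funext => y; rewrite big_nil.
  exact: cvg_cst.
case Pa: (P a).
  have -> : (fun y => \prod_(i <- a :: r | P i) F i y) = (fun y => F a y * \prod_(i <- r | P i) F i y)
    by apply/funext => y; rewrite big_cons Pa.
  exact: continuousM (HF a) IH.
have -> : (fun y => \prod_(i <- a :: r | P i) F i y) = (fun y => \prod_(i <- r | P i) F i y)
  by apply/funext => y; rewrite big_cons Pa.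
exact: IH.
Qed.

Lemma cont_det (R : realType) (n : nat) (M : R -> 'M[R]_n) (x : R) :
  (forall i j, {for x, continuous (fun y => M y i j)}) -> {for x, continuous (fun y => \det (M y))}.
Proof.
move=> HM.
rewrite /determinant.
apply: cont_sum => s.
apply: continuousM; first exact: cvg_cst.
by apply: cont_prod => i; exact: HM.
Qed.

Lemma cont_ge0_at (R : realType) (h : R -> R) (t : R) : 0 < t ->
  {for t, continuous h} -> (forall s, 0 <= s < t -> 0 < h s) -> 0 <= h t.
Proof.
move=> t0 Hc pos; rewrite leNgt; apply/negP => ht.
have := cvgr_lt (h t) Hc 0 ht => /(_ (nbhs_filter t)) H2; move: H2.
case/nbhs_ballP => r r0 Hr.
have m0 : 0 < Num.min r t by rewrite lt_min r0 t0.
have mr : Num.min r t <= r by rewrite ge_min lexx.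
have mt : Num.min r t <= t by rewrite ge_min lexx orbT.
move: m0 mr mt; set m := Num.min r t => m0 mr mt.
have := Hr (t - m / 2).
rewrite /ball /= opprB addrC subrK ger0_norm; last lra.
move=> /(_ ltac:(lra)).
have : 0 < h (t - m / 2) by apply: pos; apply/andP; split; lra.
move=> ? ?; lra.
Qed.

Lemma sumA_lb (R : realType) (N : nat) (A : 'M[R]_N) (x : 'I_N -> R) (lo : R) i :
  adjacency01 A -> lo <= 0 -> (forall j, lo <= x j) ->
  N%:R * lo <= \sum_j A i j * x j.
Proof.
move=> [A01 _] lo0 Hx.
have -> : N%:R * lo = \sum_(j < N) lo by rewrite sumr_const card_ord mulr_natl.
apply: ler_sum => j _; have h1 := Hx j.
by case: (A01 i j) => ->; rewrite ?mul0r ?mul1r.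
Qed.

Lemma pos_of_eq (R : realType) (N : nat) (A : 'M[R]_N) (x : 'I_N -> R) (m : R) :
  adjacency01 A -> N%:R < m -> (forall i, m * x i - \sum_j A i j * x j = 1) -> forall i, 0 < x i.
Proof.
move=> Aadj Nm Hx i.
pose k := [arg min_(k < i) x k]%O.
have Hk : forall j, x k <= x j by rewrite /k; case: arg_minP => //= k' _ Hm j; exact: Hm.
suff : 0 < x k by move=> h; exact: lt_le_trans h (Hk i).
rewrite ltNge; apply/negP => xk0.
have := @sumA_lb R N A x (x k) k Aadj xk0 Hk.
have := Hx k.
have : (m - N%:R) * x k <= 0 by rewrite pmulr_rle0 // subr_gt0.
move=> ? ? ?; nra.
Qed.

Lemma perron_vec (R : realType) (N : nat) (A : 'M[R]_N) (mu : R) :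
  adjacency01 A -> 0 < mu -> spectral_radius A < mu ->
  exists v : 'I_N -> R, (forall i, 0 < v i) /\ (forall i, mu * v i - \sum_j A i j * v j = 1).
Proof.
move=> Aadj mu0 mur.
pose c := mu + N%:R + 1.
pose b : R := N%:R + 1.
pose B (s : R) := (c - s)%:M - A.
pose W (s : R) : 'cV[R]_N := (\det (B s))^-1 *: (\adj (B s) *m const_mx 1).
pose w (s : R) (i : 'I_N) := W s i 0.
have b0 : 0 <= b by rewrite /b; apply: addr_ge0.
have dnz : forall s, s <= b -> \det (B s) != 0.
  move=> s sb; apply: det_nz => //; rewrite /c /b in sb *; lra.
have Weq : forall s, s <= b -> forall i, (c - s) * w s i - \sum_j A i j * w s j = 1.
  move=> s sb i.
  have H : B s *m W s = const_mx 1.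
    by rewrite /W -scalemxAr mulmxA mul_mx_adj mul_scalar_mx scalerA mulVf ?dnz // scale1r.
  have := congr1 (fun M : 'cV[R]_N => M i 0) H.
  rewrite /B mulmxBl mul_scalar_mx !mxE /w => <-.
  by rewrite /W !mxE.
have wE : w = fun s j => (\det (B s))^-1 * \sum_k \adj (B s) j k.
  apply/funext => s; apply/funext => j.
  rewrite /w /W !mxE; congr (_ * _); apply: eq_bigr => k _; by rewrite !mxE mulr1.
have Bc : forall x (i j : 'I_N), {for x, continuous (fun s => B s i j)}.
  move=> x i0 j0.
  have -> : (fun s => B s i0 j0) = (fun s => (c - s) * (i0 == j0)%:R - A i0 j0).
    by apply/funext => s1; rewrite /B !mxE mulr_natr.
  apply: continuousB; last exact: cvg_cst.
  apply: continuousM; last exact: cvg_cst.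
  apply: continuousB; [exact: cvg_cst | exact: cvg_id].
have wc : forall x i, x <= b -> {for x, continuous (fun s => w s i)}.
  move=> x i xb; rewrite wE.
  apply: continuousM.
    apply: continuousV; first exact: dnz.
    exact: cont_det.
  apply: cont_sum => k.
  have -> : (fun s => \adj (B s) i k) = (fun s => (-1) ^+ (k + i) * \det (row' k (col' i (B s)))).
    by apply/funext => s; rewrite mxE.
  apply: continuousM; first exact: cvg_cst.
  apply: cont_det => a a'.
  have -> : (fun s => row' k (col' i (B s)) a a') = (fun s => B s (lift k a) (lift i a')).
    by apply/funext => s; rewrite !mxE.
  exact: Bc.
have key : forall s, 0 <= s <= b -> forall i, 0 < w s i.
  apply: cont_ind => //.
  - apply: (@pos_of_eq R N A (w 0) c Aadj); first by rewrite /c; lra.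
    by move=> i; have := Weq 0 b0 i; rewrite subr0.
  - move=> s /andP[s0 sb] Hb i.
    have ge : forall j, 0 <= w s j.
      move=> j; apply: cont_ge0_at s0 (wc s j sb) _ => s' /andP[h1 h2].
      by apply: Hb; rewrite h1 h2.
    have := Weq s sb i.
    have := @sumA_lb R N A (w s) 0 i Aadj (lexx 0) ge.
    rewrite mulr0 => ? ?.
    have : 0 < (c - s) by rewrite /c /b in sb *; lra.
    move=> cs; have : 0 < (c - s) * w s i by lra.
    by rewrite pmulr_rgt0.
  - move=> s /andP[s0 sb] Ps.
    apply: near_e.
    apply: (@filter_forall _ _ (fun i s0 => 0 < w s0 i) (nbhs s) _) => i.
    exact: cvgr_gt _ (wc s i (ltW sb)) 0 (Ps i).
exists (w b); split.
  by apply: key; rewrite b0 lexx.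
move=> i; have := Weq b (lexx b) i.
by have -> : c - b = mu by rewrite /c /b; ring.
Qed.

Theorem theorem2 (R : realType) (N : nat) (A : 'M[R]_N)
  (beta0 betaa kappa delta : R) (p q : R -> 'I_N -> R) :
  adjacency01 A ->
  0 < beta0 -> 0 < delta -> 0 < kappa -> 0 <= betaa -> betaa < beta0 ->
  (forall i, {within [set x : R | 0 <= x], continuous (fun s => p s i)}) ->
  (forall i, {within [set x : R | 0 <= x], continuous (fun s => q s i)}) ->
  (forall (i : 'I_N) (t : R), 0 < t ->
     is_derive t 1 (fun s => p s i) (sais_p A beta0 betaa delta (p t) (q t) i)) ->
  (forall (i : 'I_N) (t : R), 0 < t ->
     is_derive t 1 (fun s => q s i) (sais_q A kappa betaa (p t) (q t) i)) ->
  (forall i, 0 <= p 0 i /\ 0 <= q 0 i /\ p 0 i + q 0 i <= 1) ->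
  beta0 / delta * spectral_radius A < 1 ->
  exists C alpha : R, 0 < C /\ 0 < alpha /\
    forall t, 0 <= t -> forall i, `|p t i| <= C * expR (- (alpha * t)).
Proof.
move=> Aadj b0 d0 k0 ba0 bab cP cQ dP dQ init hrho.
have inv := invariance Aadj b0 d0 k0 ba0 cP cQ dP dQ init.
set rho := spectral_radius A in hrho.
have hh1 : beta0 * rho < delta.
  by move: hrho; rewrite mulrAC ltr_pdivrMr // mul1r.
have rd : rho < delta / beta0 by rewrite ltr_pdivlMr // mulrC.
set mu := (Num.max rho 0 + delta / beta0) / 2.
have db0 : 0 < delta / beta0 by rewrite divr_gt0.
have mr1 : rho <= Num.max rho 0 by rewrite le_max lexx.
have mr2 : 0 <= Num.max rho 0 by rewrite le_max lexx orbT.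
have mr3 : Num.max rho 0 < delta / beta0 by rewrite gt_max rd db0.
have mu0 : 0 < mu by rewrite /mu; lra.
have mur : rho < mu by rewrite /mu; lra.
have mud : beta0 * mu < delta.
  have : mu < delta / beta0 by rewrite /mu; lra.
  by rewrite ltr_pdivlMr // mulrC.
have [v [vpos veq]] := @perron_vec R N A mu Aadj mu0 mur.
set alpha := delta - beta0 * mu.
have al0 : 0 < alpha by rewrite /alpha subr_gt0.
have vge : forall i, 1 <= mu * v i.
  move=> i; have := veq i.
  have := @sumA_lb R N A v 0 i Aadj (lexx 0) (fun j => ltW (vpos j)).
  rewrite mulr0; lra.
pose K := 2 * mu.
have Kv : forall i, 2 <= K * v i by move=> i; rewrite /K -mulrA; have := vge i; lra.
have key : forall T, 0 <= T -> forall t, 0 <= t <= T ->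
    forall i, 0 < K * v i * expR (- alpha * t) - p t i.
  move=> T T0; apply: cont_ind => //.
  - move=> i; rewrite mulr0 expR0 mulr1; have := Kv i; have [h1 [h2 h3]] := init i; lra.
  - move=> t /andP[t0 tT] Hb.
    have dh : forall j, is_derive t 1 (fun s => K * v j * expR (- alpha * s) - p s j)
        (K * v j * (- alpha * expR (- alpha * t)) - sais_p A beta0 betaa delta (p t) (q t) j).
      move=> j; have H := is_deriveB (@dE R (- alpha) (K * v j) t) (dP j t t0); exact H.
    have ge : forall j, 0 <= K * v j * expR (- alpha * t) - p t j.
      move=> j; apply: (deriv_ge0_at t0 (dh j)) => s /andP[s0 st].
      exact: (Hb s (introT andP (conj s0 st)) j).
    move=> i; apply: (touch_pos t0 (dh i)).
      move=> s /andP[s0 st]; exact: (Hb s (introT andP (conj s0 st)) i).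
    move=> h0.
    have E0 : 0 < expR (- alpha * t) by apply: expR_gt0.
    move: E0 ge h0; set E := expR (- alpha * t) => E0 ge h0.
    have X0 : 0 < K * E by rewrite mulr_gt0 // /K mulr_gt0.
    have pinv : forall j, 0 <= p t j /\ 0 <= q t j /\ 0 <= 1 - p t j - q t j by apply: inv; exact: ltW.
    have Sle : \sum_j A i j * p t j <= K * E * (mu * v i - 1).
      have -> : mu * v i - 1 = \sum_j A i j * v j by have := veq i; lra.
      rewrite mulr_sumr; apply: ler_sum => j _.
      have := ge j; case: Aadj => A01 _; case: (A01 i j) => ->; rewrite ?mul0r ?mulr0 // !mul1r.
      lra.
    have S0 : 0 <= \sum_j A i j * p t j.
      have := @sumA_lb R N A (p t) 0 i Aadj (lexx 0) (fun j => (pinv j).1); lra.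
    move: Sle S0; set S := \sum_j A i j * p t j => Sle S0.
    have [pi0 [qi0 ri0]] := pinv i.
    have n1 : 0 <= beta0 * p t i * S by rewrite !mulr_ge0 // ltW.
    have n2 : 0 <= (beta0 - betaa) * q t i * S by rewrite !mulr_ge0 // subr_ge0 ltW.
    have spb : sais_p A beta0 betaa delta (p t) (q t) i <= beta0 * S - delta * p t i.
      rewrite /sais_p -/S.
      have -> : beta0 * (1 - p t i - q t i) * S + betaa * q t i * S - delta * p t i =
        beta0 * S - delta * p t i - (beta0 * p t i * S + (beta0 - betaa) * q t i * S) by ring.
      lra.
    have b1 : beta0 * S <= beta0 * (K * E * (mu * v i - 1)) by rewrite ler_wpM2l // ltW.
    have pE : p t i = K * E * v i by rewrite -[K * E * v i]mulrAC; lra.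
    rewrite pE in spb.
    have : K * v i * (- alpha * E) - (beta0 * (K * E * (mu * v i - 1)) - delta * (K * E * v i))
       = beta0 * (K * E) by rewrite /alpha; ring.
    have : 0 < beta0 * (K * E) by rewrite mulr_gt0.
    move=> ? ?; lra.
  - move=> t /andP[t0 tT] Pt.
    have : \forall s \near t, forall i, 0 <= s -> 0 < K * v i * expR (- alpha * s) - p s i.
      apply: (@filter_forall _ _ (fun i s => 0 <= s -> 0 < K * v i * expR (- alpha * s) - p s i) (nbhs t) _) => i.
      exact: cont_near (wcD (@wcE R (- alpha) (K * v i)) (wcN (cP i))) t0 (Pt i).
    move=> /near_e [e ee0 He]; exists e => // s /andP[ts se] i.
    apply: He; [by rewrite ts | exact: le_trans ts].
exists (K * \sum_i v i + 1), alpha; split; last split => //.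
  rewrite ltr_wpDl //; apply: mulr_ge0; first by rewrite /K; apply: mulr_ge0 => //; exact: ltW.
  by apply: sumr_ge0 => i _; exact: ltW.
move=> t t0 i.
have := key t t0 t; rewrite t0 lexx => /(_ isT i).
have [pi0 _] := inv t t0 i.
rewrite ger0_norm // mulNr => h.
have vs : v i <= \sum_j v j.
  rewrite (bigD1 i) //= lerDl; apply: sumr_ge0 => j _; exact: ltW.
have E0 : 0 < expR (- (alpha * t)) by apply: expR_gt0.
have K0 : 0 < K by rewrite /K mulr_gt0.
have : K * v i * expR (- (alpha * t)) <= (K * \sum_j v j + 1) * expR (- (alpha * t)).
  apply: ler_wpM2r; first exact: ltW.
  have : K * v i <= K * \sum_j v j by apply: ler_wpM2l => //; exact: ltW.
  lra.
lra.
Qed.
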